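(* For every $k\ge 1$, the bi-hypergraph obtained from $\mathcal H_{2k+1}$ by removing the edge $\{v_{2k+1,1},v_{2k+1,2},v_{2k+1,3}\}$ and adding the edges $\{v_{1,j},v_{2k+1,j},v_{2k+1,j+1}\}$ for all $j\in[3]$ is minimal uncolorable.
   Context: A bi-hypergraph $\mathcal H=(V,E)$ consists of a finite vertex set $V$ and a set $E$ of subsets of $V$, called edges, with no edge contained in another. A mapping $f:V\to\mathbb N$ is a proper coloring of $\mathcal H$ if $1<|f(e)|<|e|$ for every $e\in E$, where $f(e)=\{f(v):v\in e\}$. $\mathcal H$ is colorable if it has a proper coloring, and uncolorable otherwise. A subhypergraph of $\mathcal H$ is a bi-hypergraph $(V',E')$ with $V'\subseteq V$, $E'\subseteq E$; $\mathcal H$ is minimal uncolorable if it is uncolorable but every proper subhypergraph of it is colorable. For $k\ge 2$, $\mathcal H_k$ is the $3$-uniform bi-hypergraph with vertex set $\{v_{i,j}: i\in[k], j\in[3]\}$ (all distinct), with the convention $v_{i,4}=v_{i,1}$, $v_{i,5}=v_{i,2}$, whose edges are the sets $\{v_{i,1},v_{i,2},v_{i,3}\}$ for all $i\in[k]$ and the sets $\{v_{q+1,j},v_{q,j},v_{q,j+t}\}$ for all $q\in[k-1]$, $j\in[3]$, $t\in\{1,2\}$. *)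

(* Defs.v *)
From mathcomp Require Import all_boot.
Set Implicit Arguments. Unset Strict Implicit. Unset Printing Implicit Defensive.

Definition is_bihypergraph (T : finType) (V : {set T}) (E : {set {set T}}) : Prop :=
  (forall e, e \in E -> e \subset V) /\
  (forall e e', e \in E -> e' \in E -> e \subset e' -> e = e').

Definition proper_coloring (T : finType) (E : {set {set T}}) (f : T -> nat) : Prop :=
  forall e, e \in E -> 1 < size (undup [seq f x | x <- enum e]) < #|e|.

Definition colorable (T : finType) (E : {set {set T}}) : Prop :=
  exists f : T -> nat, proper_coloring E f.

Definition subhypergraph (T : finType) (V' : {set T}) (E' : {set {set T}})
  (V : {set T}) (E : {set {set T}}) : Prop :=
  is_bihypergraph V' E' /\ V' \subset V /\ E' \subset E.

Definition minimal_uncolorable (T : finType) (V : {set T}) (E : {set {set T}}) : Prop :=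
  is_bihypergraph V E /\ ~ colorable E /\
  (forall V' E', subhypergraph V' E' V E -> (V', E') <> (V, E) -> colorable E').

(* Vertices v_{i,j}, i in [n], j in [3], encoded 0-based as (i-1, j-1). *)
Definition vtx (n : nat) := ('I_n * 'I_3)%type.

Definition jadd (j : 'I_3) (t : nat) : 'I_3 := inord ((j + t) %% 3).

Definition triangle (n : nat) (i : 'I_n) : {set vtx n} := [set (i, j) | j : 'I_3].

(* the edge {v_{q+1,j}, v_{q,j}, v_{q,j+t}} where q' = q+1 *)
Definition link_edge (n : nat) (q' q : 'I_n) (j : 'I_3) (t : nat) : {set vtx n} :=
  [set (q', j); (q, j); (q, jadd j t)].

Definition H_edges (n : nat) : {set {set vtx n}} :=
  [set e | [exists i : 'I_n, e == triangle i] ||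
           [exists q' : 'I_n, exists q : 'I_n, exists j : 'I_3, exists t : 'I_3,
              [&& val q' == (val q).+1, (t == 1 :> nat) || (t == 2 :> nat) &
                  e == link_edge q' q j t]]].

Definition modified_edges (k : nat) : {set {set vtx (2 * k).+1}} :=
  (H_edges (2 * k).+1 :\ triangle ord_max) :|:
  [set [set ((ord0 : 'I_(2 * k).+1), j); (ord_max, j); (ord_max, jadd j 1)] | j : 'I_3].

(* Main.v *)
Require Import Defs.
From mathcomp Require Import all_boot zify.
Set Implicit Arguments. Unset Strict Implicit. Unset Printing Implicit Defensive.
Definition ex2b (a b c : nat) : bool := ((a==b)||(b==c)||(a==c)) && ~~((a==b)&&(b==c)).
Definition pat (p c d j : nat) : nat := if j == p then d else c.

Lemma base_pat u0 u1 u2 : ex2b u0 u1 u2 ->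
  exists p c d, [/\ p < 3, c != d & (u0 = pat p c d 0 /\ u1 = pat p c d 1 /\ u2 = pat p c d 2)].
Proof.
rewrite /ex2b /pat => H.
case: (eqVneq u0 u1) => E01.
  by exists 2, u0, u2; split => //=; lia.
case: (eqVneq u1 u2) => E12.
  by exists 0, u1, u0; split => //=; lia.
by exists 1, u0, u1; split => //=; lia.
Qed.

Lemma ex2b_cc y c : ex2b y c c = (y != c).
Proof. rewrite /ex2b; apply/idP/idP; lia. Qed.
Lemma ex2b_cd y c d : c != d -> ex2b y c d = (y == c) || (y == d).
Proof. rewrite /ex2b => Hcd; apply/idP/idP; lia. Qed.
Lemma ex2b_sym23 a b c : ex2b a b c = ex2b a c b.
Proof. rewrite /ex2b; apply/idP/idP; lia. Qed.

Lemma step_pat p c d (x y : nat -> nat) : p < 3 -> c != d ->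
  (forall j, j < 3 -> x j = pat p c d j) ->
  (forall j t, j < 3 -> (t == 1) || (t == 2) -> ex2b (y j) (x j) (x ((j+t)%%3))) ->
  ex2b (y 0) (y 1) (y 2) ->
  forall j, j < 3 -> y j = pat p d c j.
Proof.
move=> Hp Hcd Hx Hl Ht.
have Hdc : d != c by rewrite eq_sym.
have h01 := Hl 0 1 erefl erefl; have h02 := Hl 0 2 erefl erefl.
have h11 := Hl 1 1 erefl erefl; have h12 := Hl 1 2 erefl erefl.
have h21 := Hl 2 1 erefl erefl; have h22 := Hl 2 2 erefl erefl.
rewrite /= in h01 h02 h11 h12 h21 h22.
have x0 := Hx 0 erefl; have x1 := Hx 1 erefl; have x2 := Hx 2 erefl.
move: h01 h02 h11 h12 h21 h22 Ht; rewrite x0 x1 x2 /pat; clear Hx Hl x0 x1 x2.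
case: p Hp => [|[|[|?]]] //= _; rewrite ?ex2b_cc ?(ex2b_cd _ Hcd) ?(ex2b_cd _ Hdc) => h01 h02 h11 h12 h21 h22 Ht;
  case => [|[|[|?]]] //= _; move: Ht; rewrite /ex2b; lia.
Qed.

Lemma final_pat p c d (x y z : nat -> nat) : p < 3 -> c != d ->
  (forall j, j < 3 -> z j = pat p c d j) ->
  (forall j, j < 3 -> x j = pat p d c j) ->
  (forall j t, j < 3 -> (t == 1) || (t == 2) -> ex2b (y j) (x j) (x ((j+t)%%3))) ->
  (forall j, j < 3 -> ex2b (z j) (y j) (y ((j+1)%%3))) -> False.
Proof.
move=> Hp Hcd Hz Hx Hl Hn.
have Hdc : d != c by rewrite eq_sym.
have h01 := Hl 0 1 erefl erefl; have h02 := Hl 0 2 erefl erefl.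
have h11 := Hl 1 1 erefl erefl; have h12 := Hl 1 2 erefl erefl.
have h21 := Hl 2 1 erefl erefl; have h22 := Hl 2 2 erefl erefl.
have n0 : ex2b (z 0) (y 0) (y 1) := Hn 0 erefl.
have n1 : ex2b (z 1) (y 1) (y 2) := Hn 1 erefl.
have n2 : ex2b (z 2) (y 2) (y 0) := Hn 2 erefl.
rewrite /= in h01 h02 h11 h12 h21 h22 n0 n1 n2.
have x0 := Hx 0 erefl; have x1 := Hx 1 erefl; have x2 := Hx 2 erefl.
have z0 := Hz 0 erefl; have z1 := Hz 1 erefl; have z2 := Hz 2 erefl.
move: h01 h02 h11 h12 h21 h22 n0 n1 n2; rewrite x0 x1 x2 z0 z1 z2 /pat; clear Hx Hz Hl Hn x0 x1 x2 z0 z1 z2.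
case: p Hp => [|[|[|?]]] //= _; rewrite ?ex2b_cc ?(ex2b_cd _ Hcd) ?(ex2b_cd _ Hdc);
  rewrite /ex2b; lia.
Qed.

Lemma uncol_nat K (x : nat -> nat -> nat) : 0 < K -> ~~ odd K ->
  (forall i, i < K -> ex2b (x i 0) (x i 1) (x i 2)) ->
  (forall q j t, q < K -> j < 3 -> (t == 1) || (t == 2) -> ex2b (x q.+1 j) (x q j) (x q ((j+t)%%3))) ->
  (forall j, j < 3 -> ex2b (x 0 j) (x K j) (x K ((j+1)%%3))) -> False.
Proof.
move=> K0 HK Ht Hl Hn.
have [p [c [d [Hp Hcd [x0 [x1 x2]]]]]] := base_pat (Ht 0 K0).
have rows : forall i, i < K -> forall j, j < 3 ->
   x i j = pat p (if odd i then d else c) (if odd i then c else d) j.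
  elim => [_|i IH Hi].
    by case => [|[|[|?]]] //= _.
  have IH' := IH (ltnW Hi).
  have Hl' : forall j t, j < 3 -> (t == 1) || (t == 2) -> ex2b (x i.+1 j) (x i j) (x i ((j+t)%%3)).
    by move=> j t Hj Ht'; apply: Hl => //; lia.
  move: IH'; rewrite /=; case: (odd i) => IH'.
    by apply: (step_pat Hp _ IH' Hl' (Ht _ Hi)); rewrite eq_sym.
  by apply: (step_pat Hp _ IH' Hl' (Ht _ Hi)).
have HK1 : odd K.-1 by lia.
apply: (@final_pat p c d (x K.-1) (x K) (x 0)) => //.
- by move=> j Hj; rewrite (rows 0 K0 j Hj).
- by move=> j Hj; rewrite (rows K.-1 _ j Hj) ?HK1 //; lia.
- move=> j t Hj Ht'; have := Hl K.-1 j t _ Hj Ht'; rewrite prednK //; apply; lia.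
Qed.

(* coloring for removal of a new edge *)
Definition gA (p i j : nat) : nat := if (j == p) (+) odd i then 1 else 0.

Lemma A_tri p i : p < 3 -> ex2b (gA p i 0) (gA p i 1) (gA p i 2).
Proof. by rewrite /gA; case: p => [|[|[|?]]] //= _; case: (odd i). Qed.

Lemma A_link p q j t : p < 3 -> j < 3 -> (t == 1) || (t == 2) ->
  ex2b (gA p q.+1 j) (gA p q j) (gA p q ((j+t)%%3)).
Proof.
move=> Hp Hj Ht; rewrite /gA.
case: j Hj => [|[|[|?]]] // _; case: p Hp => [|[|[|?]]] // _; case/orP: Ht => /eqP ->;
rewrite /=; by case: (odd q).
Qed.

Lemma A_new K j0 j : ~~ odd K -> j0 < 3 -> j < 3 -> j != j0 ->
  ex2b (gA ((j0+2)%%3) 0 j) (gA ((j0+2)%%3) K j) (gA ((j0+2)%%3) K ((j+1)%%3)).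
Proof.
move=> HK H0 Hj Hn; rewrite /gA (negbTE HK).
by case: j Hj Hn => [|[|[|?]]] // _; case: j0 H0 => [|[|[|?]]] // _.
Qed.

(* coloring for removal of a triangle *)
Definition alt (i j : nat) : nat := if (j == 0) (+) odd i then 1 else 0.
Definition gT (K r i j : nat) : nat :=
  if i < r then alt i j else if i == r then (if odd r then 1 else 0)
  else if i < K then 2 + alt i j else 2.

Lemma T_tri K r i : i < K -> i != r -> ex2b (gT K r i 0) (gT K r i 1) (gT K r i 2).
Proof.
move=> Hi Hr; rewrite /gT /alt (negbTE Hr) Hi.
by case: (i < r); case: (odd i).
Qed.

Lemma T_link K r q j t : r < K -> q < K -> ~~ odd K -> j < 3 -> (t == 1) || (t == 2) ->
  ex2b (gT K r q.+1 j) (gT K r q j) (gT K r q ((j+t)%%3)).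
Proof.
move=> Hr Hq HK Hj Ht.
have f1 : (q.+1 < r) ==> (q < r) && ~~(q == r) by apply/implyP; lia.
have f2 : (q.+1 == r) ==> [&& q < r, ~~ (q.+1 < r) & odd r == ~~ odd q] by apply/implyP; lia.
have f3 : (q == r) ==> [&& ~~(q < r), ~~(q.+1 < r), ~~(q.+1 == r) & odd r == odd q] by apply/implyP; lia.
have f4 : ~~(q.+1 < K) ==> [&& odd q, ~~ (q.+1 < r) & ~~(q.+1 == r)] by apply/implyP; lia.
have f5 : (q < r) ==> ~~(q == r) by apply/implyP; lia.
have f6 : (~~ (q < r) && ~~(q == r)) ==> ~~(q.+1 < r) && ~~(q.+1 == r) by apply/implyP; lia.
have f7 : (q < r) ==> (q.+1 < r) || (q.+1 == r) by apply/implyP; lia.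
case: j Hj => [|[|[|?]]] // _; case/orP: Ht => /eqP ->;
rewrite /gT /alt /= Hq;
move: f1 f2 f3 f4 f5 f6 f7; case: (q.+1 < r); case: (q.+1 == r); case: (q.+1 < K); case: (q < r);
  case: (q == r); case: (odd q); case: (odd r) => //=.
Qed.

Lemma T_new K r j : r < K -> j < 3 ->
  ex2b (gT K r 0 j) (gT K r K j) (gT K r K ((j+1)%%3)).
Proof.
move=> Hr Hj.
have E1 : (K < r) = false by lia.
have E2 : (K == r) = false by lia.
rewrite /gT /alt E1 E2 ltnn /=.
by case: (posnP r) => [->|Hr0] /=; rewrite ?Hr0; case: j Hj => [|[|[|?]]].
Qed.

(* coloring for removal of a link edge with t = 2 *)
Definition gL2 (q j0 i j : nat) : nat :=
  if (j == (if i <= q then (j0+1)%%3 else j0)) (+) odd i then 1 else 0.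

Lemma L2_tri q j0 i : j0 < 3 -> ex2b (gL2 q j0 i 0) (gL2 q j0 i 1) (gL2 q j0 i 2).
Proof.
move=> H0; rewrite /gL2; case: (i <= q); case: j0 H0 => [|[|[|?]]] // _; by case: (odd i).
Qed.

Lemma L2_link q j0 q2 j t : j0 < 3 -> j < 3 -> (t == 1) || (t == 2) ->
  ~~ [&& q2 == q, j == j0 & t == 2] ->
  ex2b (gL2 q j0 q2.+1 j) (gL2 q j0 q2 j) (gL2 q j0 q2 ((j+t)%%3)).
Proof.
move=> H0 Hj Ht Hn.
have f1 : (q2.+1 <= q) ==> (q2 <= q) by apply/implyP; lia.
have f4 : ((q2 <= q) && ~~(q2.+1 <= q)) ==> (q2 == q) by apply/implyP; lia.
have f5 : (q2.+1 <= q) ==> ~~(q2 == q) by apply/implyP; lia.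
have f6 : (q2 == q) ==> (q2 <= q) by apply/implyP; lia.
case: j Hj Hn => [|[|[|?]]] // _; case: j0 H0 => [|[|[|?]]] // _; case/orP: Ht => /eqP -> Hn;
rewrite /gL2 /=;
move: f1 f4 f5 f6 Hn; case: (q2.+1 <= q); case: (q2 <= q); case: (q2 == q); case: (odd q2) => //=.
Qed.

Lemma L2_new K q j0 j : q < K -> ~~ odd K -> j0 < 3 -> j < 3 ->
  ex2b (gL2 q j0 0 j) (gL2 q j0 K j) (gL2 q j0 K ((j+1)%%3)).
Proof.
move=> Hq HK H0 Hj.
have E1 : (K <= q) = false by lia.
rewrite /gL2 E1 (negbTE HK) /=.
by case: j Hj => [|[|[|?]]] // _; case: j0 H0 => [|[|[|?]]] // _.
Qed.

(* coloring for removal of a link edge with t = 1 *)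
Definition gL1 (K q j0 i j : nat) : nat :=
  if i <= q then (if (j == (j0+1)%%3) (+) odd i then 1 else 0)
  else if i < K then (if (j == j0) == (odd i (+) odd q) then 2 else if odd q then 0 else 1)
  else (if j == j0 then 2 else if odd q then 0 else 2).

Lemma L1_tri K q j0 i : j0 < 3 -> i < K -> ex2b (gL1 K q j0 i 0) (gL1 K q j0 i 1) (gL1 K q j0 i 2).
Proof.
move=> H0 Hi; rewrite /gL1 Hi.
by case: (i <= q); case: j0 H0 => [|[|[|?]]] // _; case: (odd i); case: (odd q).
Qed.

Lemma L1_link K q j0 q2 j t : j0 < 3 -> q < K -> ~~ odd K -> q2 < K -> j < 3 -> (t == 1) || (t == 2) ->
  ~~ [&& q2 == q, j == j0 & t == 1] ->
  ex2b (gL1 K q j0 q2.+1 j) (gL1 K q j0 q2 j) (gL1 K q j0 q2 ((j+t)%%3)).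
Proof.
move=> H0 Hq HK H2 Hj Ht Hn.
have f1 : (q2.+1 <= q) ==> (q2 <= q) by apply/implyP; lia.
have f2 : ~~ (q2.+1 < K) ==> odd q2 by apply/implyP; lia.
have f3 : ((q2 <= q) && ~~(q2.+1 <= q)) ==> (odd q2 == odd q) by apply/implyP; lia.
have f4 : ((q2 <= q) && ~~(q2.+1 <= q)) ==> (q2 == q) by apply/implyP; lia.
have f5 : (q2.+1 <= q) ==> ~~(q2 == q) by apply/implyP; lia.
have f6 : (q2 == q) ==> (q2 <= q) by apply/implyP; lia.
case: j Hj Hn => [|[|[|?]]] // _; case: j0 H0 => [|[|[|?]]] // _; case/orP: Ht => /eqP -> Hn;
rewrite /gL1 /= ?H2;
move: f1 f2 f3 f4 f5 f6 Hn; case: (q2.+1 <= q); case: (q2 <= q); case: (q2.+1 < K); case: (q2 == q);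
  case: (odd q2); case: (odd q) => //=.
Qed.

Lemma L1_new K q j0 j : q < K -> ~~ odd K -> j0 < 3 -> j < 3 ->
  ex2b (gL1 K q j0 0 j) (gL1 K q j0 K j) (gL1 K q j0 K ((j+1)%%3)).
Proof.
move=> Hq HK H0 Hj.
have E1 : (K <= q) = false by lia.
rewrite /gL1 E1 ltnn /=.
by case: j Hj => [|[|[|?]]] // _; case: j0 H0 => [|[|[|?]]] // _; case: (odd q).
Qed.

Definition pc (T : finType) (f : T -> nat) (e : {set T}) : bool :=
  1 < size (undup [seq f x | x <- enum e]) < #|e|.

Lemma card3 (T : finType) (e : {set T}) u v w :
  uniq [:: u; v; w] -> e =i [:: u; v; w] -> #|e| = 3.
Proof. by move=> Hu He; rewrite (eq_card He) (card_uniqP Hu). Qed.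

Lemma pc3 (T : finType) (f : T -> nat) (e : {set T}) u v w :
  uniq [:: u; v; w] -> e =i [:: u; v; w] -> pc f e = ex2b (f u) (f v) (f w).
Proof.
move=> Hu He.
have Hs : size (undup [seq f x | x <- enum e]) = size (undup [:: f u; f v; f w]).
  apply: perm_size; apply: uniq_perm; rewrite ?undup_uniq // => y; rewrite !mem_undup.
  have Hm : enum e =i [:: u; v; w] by move=> z; rewrite mem_enum He.
  by rewrite (eq_mem_map f Hm).
rewrite /pc (card3 Hu He) Hs /ex2b; move: (f u) (f v) (f w) => a b c.
rewrite /= !inE.
case: (eqVneq a b) => h1; case: (eqVneq a c) => h2; case: (eqVneq b c) => h3;
  rewrite ?h1 ?h2 ?h3 ?eqxx //=; try lia.
Qed.

Lemma inord_eq (n a b : nat) : a <= n -> b <= n -> (inord a == inord b :> 'I_n.+1) = (a == b).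
Proof. by move=> Ha Hb; rewrite -val_eqE /= !inordK. Qed.

Lemma val_jadd (j : 'I_3) t : nat_of_ord (jadd j t) = (nat_of_ord j + t) %% 3.
Proof. by rewrite /jadd; apply: inordK; rewrite ltn_mod. Qed.

Lemma mem_tri n (i : 'I_n) (a : 'I_n) (b : 'I_3) : ((a, b) \in triangle i) = (a == i).
Proof.
apply/imsetP/eqP => [[j _ [-> _]] // | ->]; by exists b.
Qed.

Lemma tri_shape n (i : 'I_n) :
  uniq [:: (i, inord 0 : 'I_3); (i, inord 1); (i, inord 2)] /\
  triangle i =i [:: (i, inord 0 : 'I_3); (i, inord 1); (i, inord 2)].
Proof.
split.
  by rewrite /= !inE !xpair_eqE !eqxx /= !inord_eq.
move=> [a b]; rewrite mem_tri !inE !xpair_eqE.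
case: (a == i) => //=.
by case: b => [[|[|[|m]]] Hb] //; rewrite -!val_eqE /= !inordK.
Qed.

Lemma link_shape n (q' q : 'I_n) (j : 'I_3) (t : nat) :
  val q' = (val q).+1 -> (t == 1) || (t == 2) ->
  uniq [:: (q', j); (q, j); (q, jadd j t)] /\
  link_edge q' q j t =i [:: (q', j); (q, j); (q, jadd j t)].
Proof.
move=> Hq Ht; split; last first.
  by move=> x; rewrite /link_edge !inE -!orbA.
rewrite /= !inE !xpair_eqE -!val_eqE /= val_jadd Hq.
case: j => j Hj /=; lia.
Qed.

Definition newedge k (j : 'I_3) : {set vtx (2 * k).+1} :=
  [set ((ord0 : 'I_(2 * k).+1), j); (ord_max, j); (ord_max, jadd j 1)].

Lemma new_shape k (j : 'I_3) : 0 < k ->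
  uniq [:: ((ord0 : 'I_(2 * k).+1), j); (ord_max, j); (ord_max, jadd j 1)] /\
  newedge k j =i [:: ((ord0 : 'I_(2 * k).+1), j); (ord_max, j); (ord_max, jadd j 1)].
Proof.
move=> Hk; split; last first.
  by move=> x; rewrite /newedge !inE -!orbA.
rewrite /= !inE !xpair_eqE -!val_eqE /= val_jadd.
case: j => j Hj /=; lia.
Qed.

Lemma E_cases k (e : {set vtx (2 * k).+1}) : e \in modified_edges k ->
  (exists2 i : 'I_(2 * k).+1, val i < 2 * k & e = triangle i) \/
  (exists q' q : 'I_(2 * k).+1, exists j : 'I_3, exists t : nat,
      [/\ val q' = (val q).+1, (t == 1) || (t == 2) & e = link_edge q' q j t]) \/
  (exists j : 'I_3, e = newedge k j).
Proof.
rewrite /modified_edges !inE => /orP [/andP [Hne He] | /imsetP [j _ ->]]; last by right; right; exists j.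
case/orP: He => [/existsP [i /eqP Ei] | /existsP [q' /existsP [q /existsP [j /existsP [t /and3P [/eqP Hq Ht /eqP Ee]]]]]].
  left; exists i => //.
  have : i != ord_max by apply: contraNneq Hne => Ei'; rewrite Ei Ei'.
  rewrite -val_eqE /=; case: i {Ei} => i Hi /=; lia.
by right; left; exists q', q, j, t.
Qed.

Lemma tri_in k (i : 'I_(2 * k).+1) : val i < 2 * k -> triangle i \in modified_edges k.
Proof.
move=> Hi; rewrite /modified_edges !inE; apply/orP; left; apply/andP; split.
  apply/negP => /eqP E.
  have : (i, (inord 0 : 'I_3)) \in triangle i by rewrite mem_tri.
  rewrite E mem_tri -val_eqE /=; move: Hi => /= Hi; lia.
have -> : [exists i0, triangle i == triangle i0] by apply/existsP; exists i.
done.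
Qed.

Lemma link_in k (q' q : 'I_(2 * k).+1) (j t : 'I_3) : val q' = (val q).+1 -> (t == 1 :> nat) || (t == 2 :> nat) ->
  link_edge q' q j t \in modified_edges k.
Proof.
move=> Hq Ht; rewrite /modified_edges !inE; apply/orP; left; apply/andP; split.
  apply/negP => /eqP E.
  have : (q, j) \in link_edge q' q j t by rewrite !inE eqxx orbT.
  rewrite E mem_tri -val_eqE /=; case: q' Hq {E} => q' Hq' /= Hq; lia.
apply/orP; right; apply/existsP; exists q'; apply/existsP; exists q; apply/existsP; exists j.
by apply/existsP; exists t; rewrite Hq !eqxx Ht.
Qed.

Lemma new_in k (j : 'I_3) : newedge k j \in modified_edges k.
Proof. by rewrite /modified_edges inE; apply/orP; right; apply/imsetP; exists j. Qed.

Lemma jadd_inord (j t : nat) : j < 3 -> t < 3 -> jadd (inord j) (inord t : 'I_3) = inord ((j + t) %% 3).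
Proof. by move=> Hj Ht; rewrite /jadd !inordK. Qed.

Lemma col_of k (g : nat -> nat -> nat) (e0 : {set vtx (2 * k).+1}) : 0 < k ->
  (forall i : 'I_(2 * k).+1, val i < 2 * k -> triangle i != e0 -> ex2b (g i 0) (g i 1) (g i 2)) ->
  (forall (q' q : 'I_(2 * k).+1) (j : 'I_3) (t : nat), val q' = (val q).+1 -> (t == 1) || (t == 2) ->
      link_edge q' q j t != e0 -> ex2b (g (val q).+1 j) (g q j) (g q ((j + t) %% 3))) ->
  (forall j : 'I_3, newedge k j != e0 -> ex2b (g 0 j) (g (2 * k) j) (g (2 * k) ((j + 1) %% 3))) ->
  colorable (modified_edges k :\ e0).
Proof.
move=> hk Ht Hl Hn; exists (fun x => g (nat_of_ord x.1) (nat_of_ord x.2)) => e.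
rewrite in_setD1 => /andP [Hne He].
case: (E_cases He) => [[i Hi Ei]|[[q' [q [j [t [Hq Ht' Ee]]]]]|[j Ee]]]; subst e.
- have [Hu Hm] := tri_shape i.
  have := pc3 (fun x : vtx (2 * k).+1 => g (nat_of_ord x.1) (nat_of_ord x.2)) Hu Hm.
  rewrite /pc => ->; rewrite /= !inordK //; exact: Ht.
- have [Hu Hm] := link_shape j Hq Ht'.
  have := pc3 (fun x : vtx (2 * k).+1 => g (nat_of_ord x.1) (nat_of_ord x.2)) Hu Hm.
  rewrite /pc => ->; rewrite /= val_jadd; move: (Hl q' q j t Hq Ht' Hne); by rewrite -Hq.
- have [Hu Hm] := new_shape j hk.
  have := pc3 (fun x : vtx (2 * k).+1 => g (nat_of_ord x.1) (nat_of_ord x.2)) Hu Hm.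
  rewrite /pc => ->; rewrite /= val_jadd; exact: Hn.
Qed.

Lemma remove_colorable k (e0 : {set vtx (2 * k).+1}) : 0 < k -> e0 \in modified_edges k ->
  colorable (modified_edges k :\ e0).
Proof.
move=> hk He0; have HK : ~~ odd (2 * k) by lia.
case: (E_cases He0) => [[r Hr Er]|[[q0' [q0 [j0 [t0 [Hq0 Ht0 Ee]]]]]|[j0 Ee]]]; subst e0.
- apply: (@col_of k (gT (2 * k) r)) => //.
  + move=> i Hi Hne; apply: T_tri => //; apply: contraNneq Hne => E.
    by rewrite (val_inj E).
  + move=> q' q j t Hq Ht _.
    have Hq' : q < 2 * k by case: q' Hq => /= ? ? ?; lia.
    by apply: T_link => //; rewrite ?ltn_ord.
  + by move=> j _; apply: T_new.
- case/orP: (Ht0) => /eqP Et0.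
  + apply: (@col_of k (gL1 (2 * k) q0 j0)) => //.
    * move=> i Hi _; apply: L1_tri => //.
    * move=> q' q j t Hq Ht Hne.
      have Hq' : q < 2 * k by case: q' Hq {Hne} => /= ? ? ?; lia.
      have Hq0' : q0 < 2 * k by move: (ltn_ord q0') Hq0 => /= ? ?; lia.
      apply: L1_link => //; rewrite ?ltn_ord //.
      apply: contra Hne => /and3P [/eqP E1 /eqP E2 /eqP E3].
      have E4 : q = q0 by apply: val_inj.
      have E5 : q' = q0' by apply: val_inj; rewrite /= Hq Hq0 E1.
      have E6 : j = j0 by apply: val_inj.
      by rewrite E4 E5 E6 E3 Et0.
    * by move=> j _; apply: L1_new => //; move: (ltn_ord q0') Hq0 => /= ? ?; lia.
  + apply: (@col_of k (gL2 q0 j0)) => //.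
    * move=> i Hi _; apply: L2_tri => //.
    * move=> q' q j t Hq Ht Hne; apply: L2_link => //; rewrite ?ltn_ord //.
      apply: contra Hne => /and3P [/eqP E1 /eqP E2 /eqP E3].
      have E4 : q = q0 by apply: val_inj.
      have E5 : q' = q0' by apply: val_inj; rewrite /= Hq Hq0 E1.
      have E6 : j = j0 by apply: val_inj.
      by rewrite E4 E5 E6 E3 Et0.
    * by move=> j _; apply: L2_new => //; move: (ltn_ord q0') Hq0 => /= ? ?; lia.
- apply: (@col_of k (gA ((j0 + 2) %% 3))) => //.
  + by move=> i _ _; apply: A_tri; rewrite ltn_mod.
  + by move=> q' q j t _ Ht _; apply: A_link => //; rewrite ?ltn_mod.
  + move=> j Hne; apply: A_new => //; apply: contraNneq Hne => E.
    by rewrite (val_inj E).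
Qed.

Lemma ord0_inord k : (ord0 : 'I_(2 * k).+1) = inord 0.
Proof. by apply: val_inj; rewrite /= inordK. Qed.
Lemma ordmax_inord k : (ord_max : 'I_(2 * k).+1) = inord (2 * k).
Proof. by apply: val_inj; rewrite /= inordK. Qed.

Theorem mainTheorem16 (k : nat) (hk : 1 <= k) :
  minimal_uncolorable [set: vtx (2 * k).+1] (modified_edges k).
Proof.
have Hsh : forall e, e \in modified_edges k -> exists u v w, uniq [:: u; v; w] /\ e =i [:: u; v; w].
  move=> e /E_cases [[i _ ->]|[[q' [q [j [t [Hq Ht ->]]]]]|[j ->]]].
  - by have [? ?] := tri_shape i; do 3 eexists; split; eauto.
  - by have [? ?] := link_shape j Hq Ht; do 3 eexists; split; eauto.
  - by have [? ?] := new_shape j hk; do 3 eexists; split; eauto.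
have Hc3 : forall e, e \in modified_edges k -> #|e| = 3.
  by move=> e /Hsh [u [v [w [Hu Hm]]]]; apply: card3 Hm.
split; [split|split].
- by move=> e _; apply: subsetT.
- move=> e e' He He' Hs; apply/eqP; rewrite eqEcard Hs (Hc3 _ He) (Hc3 _ He') leqnn.
  done.
- move=> [f Hf].
  have Hx : forall e, e \in modified_edges k -> pc f e := Hf.
  apply: (@uncol_nat (2 * k) (fun i j => f (inord i, inord j))).
  + lia.
  + lia.
  + move=> i Hi.
    have Hi' : \val (inord i : 'I_(2 * k).+1) < 2 * k by rewrite /= inordK; lia.
    have Hin := tri_in Hi'.
    have [Hu Hm] := tri_shape (inord i : 'I_(2 * k).+1).
    by have := Hx _ Hin; rewrite (pc3 f Hu Hm).
  + move=> q j t Hq Hj Ht.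
    have Ht3 : t < 3 by lia.
    have Hq1 : nat_of_ord (inord q.+1 : 'I_(2 * k).+1) = (nat_of_ord (inord q : 'I_(2 * k).+1)).+1.
      by rewrite !inordK //; lia.
    have Ht1 : (nat_of_ord (inord t : 'I_3) == 1) || (nat_of_ord (inord t : 'I_3) == 2) by rewrite inordK.
    have Hin := link_in (inord j) Hq1 Ht1.
    have [Hu Hm] := link_shape (inord j) Hq1 Ht1.
    by have := Hx _ Hin; rewrite (pc3 f Hu Hm) jadd_inord.
  + move=> j Hj.
    have [Hu Hm] := new_shape (inord j) hk.
    have := Hx _ (new_in k (inord j)); rewrite (pc3 f Hu Hm).
    by rewrite /jadd inordK // ord0_inord ordmax_inord.
- move=> V' E' [[HV'E _] [_ HE']] Hne.
  have HEne : E' != modified_edges k.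
    apply/negP => /eqP HE; apply: Hne; congr pair => //.
    apply/eqP; rewrite eqEsubset subsetT /=; apply/subsetP => [[a b]] _.
    have [Ha|Ha] := ltnP a (2 * k).
      apply: (subsetP (HV'E (triangle a) _)); first by rewrite HE; apply: tri_in.
      by rewrite mem_tri.
    have -> : a = ord_max by apply: val_inj => /=; move: (ltn_ord a); lia.
    apply: (subsetP (HV'E (newedge k b) _)); first by rewrite HE; apply: new_in.
    by rewrite /newedge !inE eqxx orbT.
  have /properP [_ [e0 He0 Hn0]] : E' \proper modified_edges k by rewrite properEneq HEne HE'.
  have [f Hf] := remove_colorable hk He0.
  exists f => e He; apply: Hf; rewrite in_setD1 (subsetP HE' _ He) andbT.
  by apply: contraNneq Hn0 => <-.
Qed.
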